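(* Let $\Gamma=(V,E)$ be a simple graph of order $n$ and size $m$, and let $\lambda$ be the spectral radius of $\Gamma$. Then the global dual alliance number of $\Gamma$ satisfies $$\gamma_{a_d}(\Gamma)\ge \left\lceil\frac{2m+n}{4(\lambda+1)}\right\rceil$$ and the global strong dual alliance number of $\Gamma$ satisfies $$\gamma_{\hat{a}_d}(\Gamma)\ge \left\lceil\frac{m+n}{2\lambda+1}\right\rceil.$$
   Context: For $S\subseteq V$ and $v\in V$, $N_S(v)=\{u\in S: u\sim v\}$ and $N_{V\setminus S}(v)=\{u\in V\setminus S: u\sim v\}$. A nonempty set $S\subseteq V$ is a global dual alliance if (i) $|N_S(v)|+1\ge |N_{V\setminus S}(v)|$ for every $v\in S$ and (ii) $|N_S(v)|\ge |N_{V\setminus S}(v)|+1$ for every $v\in V\setminus S$. It is a global strong dual alliance if (i') $|N_S(v)|\ge |N_{V\setminus S}(v)|$ for every $v\in S$ and (ii') $|N_S(v)|\ge |N_{V\setminus S}(v)|+2$ for every $v\in V\setminus S$. $\gamma_{a_d}(\Gamma)$ (resp. $\gamma_{\hat a_d}(\Gamma)$) is the minimum cardinality of a global dual (resp. global strong dual) alliance. The spectral radius is the largest eigenvalue of the adjacency matrix of $\Gamma$. *)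

(* Defs.v *)
From HB Require Import structures.
From mathcomp Require Import all_boot all_order all_algebra.
From mathcomp Require Import reals.
Set Implicit Arguments. Unset Strict Implicit. Unset Printing Implicit Defensive.
Import Order.TTheory GRing.Theory Num.Theory.

Definition simple_graph (n : nat) (e : rel 'I_n) : Prop :=
  irreflexive e /\ symmetric e.

Definition gsize (n : nat) (e : rel 'I_n) : nat :=
  #|[set p : 'I_n * 'I_n | e p.1 p.2 && (p.1 < p.2)%N]|.

Definition nbhd (n : nat) (e : rel 'I_n) (S : {set 'I_n}) (v : 'I_n) : {set 'I_n} :=
  [set u in S | e u v].

Definition global_dual_alliance (n : nat) (e : rel 'I_n) (S : {set 'I_n}) : bool :=
  [&& S != set0,
      [forall v in S, #|nbhd e (~: S) v| <= #|nbhd e S v| + 1] &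
      [forall v in ~: S, #|nbhd e (~: S) v| + 1 <= #|nbhd e S v|]].

Definition global_strong_dual_alliance (n : nat) (e : rel 'I_n) (S : {set 'I_n}) : bool :=
  [&& S != set0,
      [forall v in S, #|nbhd e (~: S) v| <= #|nbhd e S v|] &
      [forall v in ~: S, #|nbhd e (~: S) v| + 2 <= #|nbhd e S v|]].

(* minimum cardinality (the full vertex set is always such an alliance when n > 0) *)
Definition gamma_ad (n : nat) (e : rel 'I_n) : nat :=
  \big[minn/n]_(S : {set 'I_n} | global_dual_alliance e S) #|S|.

Definition gamma_sad (n : nat) (e : rel 'I_n) : nat :=
  \big[minn/n]_(S : {set 'I_n} | global_strong_dual_alliance e S) #|S|.

Definition adjmx (R : nzRingType) (n : nat) (e : rel 'I_n) : 'M[R]_n :=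
  \matrix_(i, j) (e i j)%:R%R.

Definition spectral_radius (R : realType) (n : nat) (e : rel 'I_n) (lam : R) : Prop :=
  eigenvalue (adjmx R e) lam /\ (forall mu : R, eigenvalue (adjmx R e) mu -> (mu <= lam)%R).

(* Main.v *)
Require Import Defs.
From HB Require Import structures.
From mathcomp Require Import all_boot all_order all_algebra.
From mathcomp Require Import reals.
From mathcomp Require Import ring lra.
Import Order.TTheory GRing.Theory Num.Theory.
Set Implicit Arguments. Unset Strict Implicit. Unset Printing Implicit Defensive.
Local Open Scope ring_scope.
Section QF.
Variables (R : realType) (n : nat).
Implicit Types (C : 'M[R]_n) (u w x : 'rV[R]_n).

Definition qf C u w : R := (u *m C *m w^T) 0 0.
Definition nrm x : R := (x *m x^T) 0 0.

Lemma qfDl C u v w : qf C (u + v) w = qf C u w + qf C v w.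
Proof. by rewrite /qf !mulmxDl mxE. Qed.
Lemma qfZl C t u w : qf C (t *: u) w = t * qf C u w.
Proof. by rewrite /qf -!scalemxAl mxE. Qed.
Lemma qfDr C u v w : qf C u (v + w) = qf C u v + qf C u w.
Proof. by rewrite /qf linearD /= mulmxDr mxE. Qed.
Lemma qfZr C t u w : qf C u (t *: w) = t * qf C u w.
Proof. by rewrite /qf linearZ /= -scalemxAr mxE. Qed.
Lemma qf_sym C u w : C^T = C -> qf C u w = qf C w u.
Proof.
move=> sC; rewrite /qf.
rewrite -[in LHS](trmxK (u *m C *m w^T)) [in LHS]mxE.
by rewrite !trmx_mul trmxK sC mulmxA.
Qed.
Lemma qfB C D u w : qf (C - D) u w = qf C u w - qf D u w.
Proof. by rewrite /qf mulmxBr mulmxBl !mxE. Qed.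
Lemma qf_scalar (a : R) u : qf a%:M u u = a * nrm u.
Proof. by rewrite /qf mul_mx_scalar -scalemxAl mxE. Qed.
Lemma qf0 C : qf C 0 0 = 0.
Proof. by rewrite /qf !mul0mx mxE. Qed.
Lemma nrm0 : nrm 0 = 0.
Proof. by rewrite /nrm mul0mx mxE. Qed.

Lemma qfE C x : qf C x x = \sum_j \sum_i x 0 i * C i j * x 0 j.
Proof.
by rewrite /qf mxE; apply: eq_bigr => j _; rewrite !mxE mulr_suml.
Qed.
Lemma nrmE x : nrm x = \sum_i x 0 i ^+ 2.
Proof. by rewrite /nrm mxE; apply: eq_bigr => i _; rewrite mxE expr2. Qed.

Lemma sq_le_nrm x i : x 0 i ^+ 2 <= nrm x.
Proof.
rewrite nrmE (bigD1 i) //= lerDl sumr_ge0 // => j _; exact: sqr_ge0.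
Qed.

Lemma nrm_ge0 x : 0 <= nrm x.
Proof. by rewrite nrmE sumr_ge0 // => j _; exact: sqr_ge0. Qed.

Lemma nrm_gt0 x : x != 0 -> 0 < nrm x.
Proof.
move=> xn0; case: (pickP (fun i => x 0 i != 0)) => [i Hi|H].
  apply: lt_le_trans (sq_le_nrm x i); rewrite exprn_even_gt0 //.
exfalso; move/negP: xn0; apply; apply/eqP/rowP => i.
by move: (H i) => /= /negbFE/eqP ->; rewrite mxE.
Qed.

Lemma qf_bound C x : qf C x x <= (\sum_i \sum_j `|C i j|) * nrm x.
Proof.
rewrite qfE exchange_big /= mulr_suml; apply: ler_sum => i _.
rewrite mulr_suml; apply: ler_sum => j _.
have hi := sq_le_nrm x i; have hj := sq_le_nrm x j.
have h1 : x 0 i * x 0 j <= nrm x by nra.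
have h2 : - nrm x <= x 0 i * x 0 j by nra.
have -> : x 0 i * C i j * x 0 j = C i j * (x 0 i * x 0 j) by ring.
case: (lerP 0 (C i j)) => hc.
  by rewrite ger0_norm //; nra.
by rewrite ltr0_norm //; nra.
Qed.

Lemma quad_disc (a b c : R) : 0 <= c -> (forall t, 0 <= a + 2 * b * t + c * t ^+ 2) ->
  b ^+ 2 <= a * c.
Proof.
move=> c0 H; case: (ltrP 0 c) => hc.
  have Ht := H (- b / c).
  have ct : c * (- b / c) = - b by field; rewrite gt_eqF.
  nra.
have c00 : c = 0 by apply/le_anti; rewrite hc c0.
subst c; case: (eqVneq b 0) => [->|bn0]; first by rewrite expr0n /= mulr0.
have Ht := H (- (a + 1) / (2 * b)).
have : 2 * b * (- (a + 1) / (2 * b)) = - (a + 1) by field.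
lra.
Qed.

Lemma rayleigh (A : 'M[R]_n) (lam : R) : (0 < n)%N -> A^T = A ->
  (forall mu, eigenvalue A mu -> mu <= lam) ->
  forall x, qf A x x <= lam * nrm x.
Proof.
move=> n0 sA Hlam.
pose E : classical_sets.set R := fun r => exists2 x : 'rV[R]_n, x != 0 & r = qf A x x / nrm x.
pose KA := \sum_i \sum_j `|A i j|.
have ubE : classical_sets.ubound E KA.
  move=> r [x xn0 ->]; rewrite ler_pdivrMr ?nrm_gt0 //; exact: qf_bound.
have neE : classical_sets.nonempty E.
  have h1 : (const_mx 1 : 'rV[R]_n) != 0.
    apply/negP => /eqP/rowP/(_ (Ordinal n0)); rewrite !mxE => /eqP.
    by rewrite oner_eq0.
  by exists (qf A (const_mx 1) (const_mx 1) / nrm (const_mx 1)); exists (const_mx 1).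
pose M := sup E.
have ubM : forall x, x != 0 -> qf A x x <= M * nrm x.
  move=> x xn0; rewrite -ler_pdivrMr ?nrm_gt0 //.
  by apply: (ub_le_sup (ex_intro _ KA ubE)); exists x.
have psd : forall x, 0 <= qf (M%:M - A) x x.
  move=> x; case: (eqVneq x 0) => [->|xn0]; first by rewrite qf0.
  by rewrite qfB qf_scalar subr_ge0 ubM.
have eigM : eigenvalue A M.
  case: (boolP (eigenvalue A M)) => // hne; exfalso.
  have uB' : (A - M%:M) \in unitmx.
    by rewrite -row_free_unit -kermx_eq0; move: hne; rewrite /eigenvalue /eigenspace negbK.
  pose B := M%:M - A.
  have sB : B^T = B by rewrite /B linearB /= tr_scalar_mx sA.
  pose Ci := - invmx (A - M%:M).
  pose K := \sum_i \sum_j `|Ci^T i j| + 1.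
  have K0 : 0 < K.
    rewrite /K ltr_pwDr // sumr_ge0 // => i _; rewrite sumr_ge0 // => j _.
  have ubE' : classical_sets.ubound E (M - 1 / K).
    move=> r [x xn0 ->]; rewrite ler_pdivrMr ?nrm_gt0 //.
    pose y := x *m Ci.
    have yB : y *m B = x.
      by rewrite /y /B -opprB /Ci !mulmxN mulNmx opprK mulmxKV.
    have byx : qf B y x = nrm x by rewrite /qf yB.
    have byy : qf B y y = qf Ci^T x x.
      by rewrite /qf yB /y trmx_mul mulmxA.
    have bxy : qf B x y = nrm x by rewrite qf_sym.
    have CS : qf B x y ^+ 2 <= qf B x x * qf B y y.
      apply: quad_disc; first exact: psd.
      move=> t; have := psd (x + t *: y).
      rewrite !qfDl !qfDr !qfZl !qfZr (qf_sym y x sB); nra.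
    have hb := qf_bound Ci^T x.
    have N0 : 0 < nrm x := @nrm_gt0 x xn0.
    have bx0 := psd x.
    have hK : nrm x <= K * qf B x x.
      rewrite bxy byy in CS.
      have : nrm x ^+ 2 <= qf B x x * (K * nrm x).
        apply: le_trans CS _; apply: ler_wpM2l => //.
        apply: le_trans hb _; rewrite /K; nra.
      nra.
    have : qf B x x = M * nrm x - qf A x x by rewrite /B qfB qf_scalar.
    move=> hB; rewrite hB in hK.
    have : nrm x / K <= M * nrm x - qf A x x by rewrite ler_pdivrMr // mulrC.
    have -> : (M - 1 / K) * nrm x = M * nrm x - nrm x / K by field; rewrite gt_eqF.
    lra.
  have := ge_sup neE ubE'.
  rewrite -/M => hM.
  have : 0 < 1 / K by rewrite divr_gt0.
  lra.
have Mlam := Hlam _ eigM.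
move=> x; case: (eqVneq x 0) => [->|xn0]; first by rewrite qf0 nrm0 mulr0.
apply: le_trans (ubM x xn0) _; apply: ler_wpM2r => //; exact: nrm_ge0.
Qed.
End QF.
Section Graph.
Variables (R : realType) (n : nat) (e : rel 'I_n).

Definition chi (S : {set 'I_n}) (u : 'I_n) : R := if u \in S then 1 else 0.

Lemma card_nbhd S v : (#|nbhd e S v|)%:R = \sum_u chi S u * (e u v)%:R :> R.
Proof.
rewrite /nbhd -sum1_card natr_sum big_mkcond /=; apply: eq_bigr => u _.
by rewrite !inE /chi; case: (u \in S); case: (e u v); rewrite /= ?mul1r ?mul0r.
Qed.

Lemma card_nbhdC S v : (#|nbhd e (~: S) v|)%:R = \sum_u (1 - chi S u) * (e u v)%:R :> R.
Proof.
rewrite /nbhd -sum1_card natr_sum big_mkcond /=; apply: eq_bigr => u _.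
by rewrite !inE /chi; case: (u \in S); case: (e u v); rewrite /= ?subrr ?subr0 ?mul1r ?mul0r.
Qed.

Lemma total_deg_nat : irreflexive e -> symmetric e ->
  (\sum_v \sum_u (e u v : nat) = 2 * gsize e)%N.
Proof.
move=> irr sym.
have gE : gsize e = (\sum_p (e p.1 p.2 && (p.1 < p.2)%N : nat))%N.
  rewrite /gsize -sum1_card big_mkcond /=; apply: eq_bigr => p _.
  by rewrite inE; case: (_ && _).
rewrite exchange_big /= pair_bigA /= gE mul2n -addnn.
have hinj : injective (fun p : 'I_n * 'I_n => (p.2, p.1)) by move=> [a b] [c d] /= [-> ->].
have -> : (\sum_p (e p.1 p.2 && (p.1 < p.2)%N : nat) + \sum_p (e p.1 p.2 && (p.1 < p.2)%N : nat) =
   \sum_p (e p.1 p.2 && (p.1 < p.2)%N : nat) + \sum_p (e p.1 p.2 && (p.2 < p.1)%N : nat))%N.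
  congr (_ + _)%N; rewrite (reindex_inj hinj) /=; apply: eq_bigr => p _.
  by rewrite sym.
rewrite -big_split /=; apply: eq_bigr => [[a b]] _ /=.
case: (ltngtP a b) => h; rewrite ?andbT ?andbF ?addn0 //.

have hab : a = b by apply: val_inj.
by subst b; rewrite irr.
Qed.

Lemma total_deg : irreflexive e -> symmetric e ->
  \sum_v \sum_u (e u v)%:R = (2 * gsize e)%:R :> R.
Proof.
move=> irr sym; rewrite -total_deg_nat // natr_sum; apply: eq_bigr => v _.
by rewrite natr_sum.
Qed.

Lemma qf_chi S : qf (adjmx R e) (\row_i chi S i) (\row_i chi S i) =
  \sum_v chi S v * (#|nbhd e S v|)%:R.
Proof.
rewrite qfE; apply: eq_bigr => v _; rewrite card_nbhd mulr_sumr.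
apply: eq_bigr => u _; rewrite /adjmx !mxE; ring.
Qed.

Lemma nrm_chi S : nrm (\row_i chi S i) = (#|S|)%:R :> R.
Proof.
rewrite nrmE -sum1_card natr_sum [RHS]big_mkcond /=; apply: eq_bigr => i _.
by rewrite mxE /chi; case: (i \in S); rewrite ?expr1n ?expr0n.
Qed.

Lemma sums (lam : R) (S : {set 'I_n}) : simple_graph e ->
  (forall x, qf (adjmx R e) x x <= lam * nrm x) ->
  exists a b c : R, [/\ a + 2 * b + c = (2 * gsize e)%:R, a <= lam * (#|S|)%:R, 0 <= a,
   (forall k, (forall v, v \in S -> (#|nbhd e (~: S) v|)%:R <= (#|nbhd e S v|)%:R + k) ->
       b <= a + k * (#|S|)%:R) &
   (forall k, (forall v, v \notin S -> (#|nbhd e (~: S) v|)%:R + k <= (#|nbhd e S v|)%:R) ->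
       c + k * (n%:R - (#|S|)%:R) <= b)].
Proof.
move=> [irr sym] ray.
pose c v := chi S v.
pose dS v : R := (#|nbhd e S v|)%:R.
pose dT v : R := (#|nbhd e (~: S) v|)%:R.
pose a := \sum_v c v * dS v.
pose b := \sum_v c v * dT v.
pose b' := \sum_v (1 - c v) * dS v.
pose cc := \sum_v (1 - c v) * dT v.
have sE : \sum_v c v = (#|S|)%:R.
  rewrite -sum1_card natr_sum [RHS]big_mkcond /=; apply: eq_bigr => i _.
  by rewrite /c /chi; case: (i \in S).
have nsE : \sum_v (1 - c v) = n%:R - (#|S|)%:R.
  by rewrite sumrB sE sumr_const card_ord.
have bb : b = b'.
  rewrite /b /b'.
  under eq_bigr do rewrite /dT card_nbhdC mulr_sumr.
  under [RHS]eq_bigr do rewrite /dS card_nbhd mulr_sumr.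
  rewrite [RHS]exchange_big /=; apply: eq_bigr => i _; apply: eq_bigr => j _.
  rewrite (sym j i) /c; ring.
have tot : a + b + b' + cc = (2 * gsize e)%:R.
  rewrite -total_deg //.
  have -> : a + b + b' + cc = (a + b') + (b + cc) by ring.
  have -> : a + b' = \sum_v dS v by rewrite -big_split; apply: eq_bigr => v _ /=; ring.
  have -> : b + cc = \sum_v dT v by rewrite -big_split; apply: eq_bigr => v _ /=; ring.
  rewrite -big_split; apply: eq_bigr => v _; rewrite /dS /dT card_nbhd card_nbhdC.
  rewrite -big_split; apply: eq_bigr => u _ /=; ring.
exists a, b, cc; split.
- rewrite -tot bb; ring.
- by rewrite /a -qf_chi -(nrm_chi S); apply: ray.
- rewrite /a sumr_ge0 // => v _; rewrite /c /chi /dS.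
  by case: (v \in S); rewrite ?mul1r ?mul0r // ler0n.
- move=> k Hk; rewrite -sE mulr_sumr -big_split; apply: ler_sum => v _ /=.
  rewrite /c /chi; case: (boolP (v \in S)) => vS.
    by rewrite !mul1r mulr1; apply: Hk.
  by rewrite !mul0r mulr0 addr0.
- move=> k Hk; rewrite bb -nsE mulr_sumr -big_split; apply: ler_sum => v _ /=.
  rewrite /c /chi; case: (boolP (v \in S)) => vS.
    by rewrite subrr !mul0r mulr0 addr0.
  by rewrite subr0 !mul1r mulr1; apply: Hk.
Qed.
End Graph.
Theorem theorem8 (R : realType) (n : nat) (e : rel 'I_n) (lam : R) :
  (0 < n)%N -> simple_graph e -> spectral_radius e lam ->
  Num.ceil (((2 * gsize e + n)%:R) / (4 * (lam + 1))) <= (gamma_ad e)%:Z /\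
  Num.ceil (((gsize e + n)%:R) / (2 * lam + 1)) <= (gamma_sad e)%:Z.
Proof.
move=> n0 sg [eigl maxl].
have [irr sym] := sg.
have sA : (adjmx R e)^T = adjmx R e.
  by apply/matrixP => i j; rewrite !mxE sym.
have ray := rayleigh n0 sA maxl.
have T0 : [set: 'I_n] != set0 by apply/set0Pn; exists (Ordinal n0); rewrite inE.
have nbT : forall v, #|nbhd e (~: [set: 'I_n]) v| = 0%N.
  move=> v; rewrite setCT /nbhd.
  have -> : [set u in set0 | e u v] = set0 by apply/setP => u; rewrite !inE.
  by rewrite cards0.
have cT : #|[set: 'I_n]| = n by rewrite cardsT card_ord.
have lam0 : 0 <= lam.
  have [a [b [c [_ ha a0 _ _]]]] := sums setT sg ray.
  rewrite cT in ha.
  have : 0 < (n%:R : R) by rewrite ltr0n.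
  nra.
have b1 : forall S, global_dual_alliance e S ->
    ((2 * gsize e + n)%:R) / (4 * (lam + 1)) <= (#|S|)%:R.
  move=> S /and3P[Sn0 /forall_inP H1 /forall_inP H2].
  have [a [b [c [tot ha a0 hb hc]]]] := sums S sg ray.
  have hb1 := hb 1 (fun v vS => (ltac:(have := H1 v vS; rewrite -(ler_nat R) natrD; move=> h; exact: h))).
  have hc1 := hc 1 (fun v vS => (ltac:(have := H2 v (ltac:(by rewrite in_setC)); rewrite -(ler_nat R) natrD; move=> h; exact: h))).
  rewrite ler_pdivrMr; last by lra.
  rewrite natrD natrM; rewrite natrM in tot.
  nra.
have b2 : forall S, global_strong_dual_alliance e S ->
    ((gsize e + n)%:R) / (2 * lam + 1) <= (#|S|)%:R.
  move=> S /and3P[Sn0 /forall_inP H1 /forall_inP H2].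
  have [a [b [c [tot ha a0 hb hc]]]] := sums S sg ray.
  have hb1 := hb 0 (fun v vS => (ltac:(have := H1 v vS; rewrite -(ler_nat R) addr0; move=> h; exact: h))).
  have hc1 := hc 2 (fun v vS => (ltac:(have := H2 v (ltac:(by rewrite in_setC)); rewrite -(ler_nat R) natrD; move=> h; exact: h))).
  rewrite ler_pdivrMr; last by lra.
  rewrite natrD; rewrite natrM in tot.
  nra.
split; rewrite ceil_le_int.
- rewrite /gamma_ad.
  apply: (big_ind (fun k : nat => ((2 * gsize e + n)%:R) / (4 * (lam + 1)) <= (k%:Z)%:~R)).
  + have := b1 setT; rewrite cT; apply.
    rewrite /global_dual_alliance T0 /=; apply/andP; split.
      by apply/forall_inP => v _; rewrite nbT.
    by apply/forall_inP => v; rewrite setCT inE.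
  + by move=> x y hx hy; rewrite /minn; case: ifP.
  + by move=> S HS; exact: b1.
- rewrite /gamma_sad.
  apply: (big_ind (fun k : nat => ((gsize e + n)%:R) / (2 * lam + 1) <= (k%:Z)%:~R)).
  + have := b2 setT; rewrite cT; apply.
    rewrite /global_strong_dual_alliance T0 /=; apply/andP; split.
      by apply/forall_inP => v _; rewrite nbT.
    by apply/forall_inP => v; rewrite setCT inE.
  + by move=> x y hx hy; rewrite /minn; case: ifP.
  + by move=> S HS; exact: b2.
Qed.
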